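(* Let $\mathcal{N},\mathcal{N}':\mathcal{L}(A)\to\mathcal{L}(B)$ be quantum channels with the same Choi–Kraus space, $\mathcal{K}(\mathcal{N})=\mathcal{K}(\mathcal{N}')$. Then a quantum feedback-assisted code is zero-error for $\mathcal{N}$ if and only if it is zero-error for $\mathcal{N}'$. Consequently the maximal number $M_f(n;K)$ of messages of a zero-error feedback-assisted code with $n$ channel uses depends only on $K=\mathcal{K}(\mathcal{N})$, and the quantum feedback-assisted zero-error capacity $$C_{0EF}(K)=\lim_{n\to\infty}\frac1n\log M_f(n;K)=\sup_n\frac1n\log M_f(n;K)$$ (the limit exists and equals the supremum) is a function of $K$ only.
   Context: $A,B$ are finite-dimensional Hilbert spaces; $\mathcal{L}(A)$ denotes linear operators on $A$ and $\mathcal{L}(A\to B)$ linear maps $A\to B$. A quantum channel is a completely positive trace-preserving map $\mathcal{N}(\rho)=\sum_j E_j\rho E_j^\dagger$ with $E_j\in\mathcal{L}(A\to B)$, $\sum_jE_j^\dagger E_j=\mathbb{1}$; its Choi–Kraus space is $\mathcal{K}(\mathcal{N})=\mathrm{span}\{E_j\}$ (independent of the Kraus decomposition). A quantum feedback-assisted code with $n$ channel uses and $M$ messages consists of a pure state $|\phi\rangle\in X_0\otimes Y_0$ and, for $t=1,\dots,n$, isometries $U^{(m)}_t:X_{t-1}\otimes F_{t-1}\to A_t\otimes X_t$ ($m=1,\dots,M$) and $W_t:Y_{t-1}\otimes B_t\to F_t\otimes Y_t$, where $A_t\cong A$, $B_t\cong B$, all $X_t,Y_t,F_t$ are finite-dimensional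 and $F_0=F_n=\mathbb{C}$. For message $m$, with channel Kraus operators $E_j$ applied $A_t\to B_t$ in round $t$, Bob's final state on $Y_n$ is $\rho^{(m)}=\sum_{j_1,\dots,j_n}\mathrm{tr}_{X_n}\big(Q|\phi\rangle\langle\phi|Q^\dagger\big)$ with $Q=W_nE_{j_n}U^{(m)}_n\cdots W_1E_{j_1}U^{(m)}_1$. The code is zero-error for $\mathcal{N}$ if the states $\rho^{(m)}$, $m=1,\dots,M$, have pairwise orthogonal supports. Logarithms are base 2. *)

(* Defs.v *)
From HB Require Import structures.
From mathcomp Require Import all_boot all_order all_algebra.
From mathcomp Require Import mxtens.
From mathcomp Require Import all_classical all_reals all_analysis.

Set Implicit Arguments.
Unset Strict Implicit.
Unset Printing Implicit Defensive.

Import Order.TTheory GRing.Theory Num.Theory.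
Local Open Scope ring_scope.

Section QDefs.
Variable C : numClosedFieldType.

Definition adjmx m n (A : 'M[C]_(m, n)) : 'M[C]_(n, m) := (map_mx (fun z => z^*) A)^T.

Definition isometry m n (V : 'M[C]_(m, n)) : Prop := adjmx V *m V = 1%:M.

(* A quantum channel L(A) -> L(B) (dim A = dA, dim B = dB) given by Kraus
   operators E_j : A -> B, j < k, with sum_j E_j^dagger E_j = 1. *)
Definition is_channel dA dB k (E : 'I_k -> 'M[C]_(dB, dA)) : Prop :=
  \sum_(j < k) adjmx (E j) *m E j = 1%:M.

(* The Choi-Kraus space span{E_j}, as a row space (rows = vectorised E_j). *)
Definition kraus_mx dA dB k (E : 'I_k -> 'M[C]_(dB, dA)) : 'M[C]_(k, dB * dA) :=
  \matrix_(j < k) mxvec (E j).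

(* Matrix of the index map g (a permutation of tensor factors when g is a bijection). *)
Definition idx_mx m n (g : 'I_n -> 'I_m) : 'M[C]_(m, n) :=
  \matrix_(i, j) (i == g j)%:R.

(* (B (x) X) (x) Y  -->  X (x) (Y (x) B) *)
Definition reorder_idx b x y (k : 'I_(b * x * y)) : 'I_(x * (y * b)) :=
  let: (bx, j) := mxtens_unindex k in
  let: (i, l) := mxtens_unindex bx in
  mxtens_index (l, mxtens_index (j, i)).

(* X (x) (F (x) Y)  -->  (X (x) F) (x) Y *)
Definition reassoc_idx x f y (k : 'I_(x * (f * y))) : 'I_(x * f * y) :=
  let: (i, fy) := mxtens_unindex k in
  let: (l, j) := mxtens_unindex fy in
  mxtens_index (mxtens_index (i, l), j).

Definition ptrace1 a b (rho : 'M[C]_(a * b)) : 'M[C]_b :=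
  \matrix_(i, j) \sum_(l < a) rho (mxtens_index (l, i)) (mxtens_index (l, j)).

Definition orth_supports m (A B : 'M[C]_m) : Prop :=
  forall u v : 'cV[C]_m, adjmx (A *m u) *m (B *m v) = 0.

(* Round t+1 (t = 0..n-1) uses  U m t : X_t (x) F_t -> A (x) X_(t+1)  and
   W t : Y_t (x) B -> F_(t+1) (x) Y_(t+1).  Dimensions: xd t = dim X_t,
   yd t = dim Y_t, fd t = dim F_t, with F_0 = F_n = C.  The initial pure state
   |phi> lives in X_0 (x) F_0 (x) Y_0 = X_0 (x) Y_0 (since dim F_0 = 1). *)
Record fcode (dA dB n M : nat) := FCode {
  xd : nat -> nat;
  yd : nat -> nat;
  fd : nat -> nat;
  fd0 : fd 0%N = 1%N;
  fdn : fd n = 1%N;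
  phi : 'cV[C]_(xd 0%N * fd 0%N * yd 0%N);
  phi_unit : isometry phi;
  encU : 'I_M -> forall t : nat, 'M[C]_(dA * xd t.+1, xd t * fd t);
  encU_iso : forall m t, (t < n)%N -> isometry (encU m t);
  decW : forall t : nat, 'M[C]_(fd t.+1 * yd t.+1, yd t * dB);
  decW_iso : forall t, (t < n)%N -> isometry (decW t)
}.

Section Run.
Variables (dA dB n M : nat) (c : fcode dA dB n M) (m : 'I_M).

(* One round t+1, with Kraus operator Ej applied A -> B; global state ordered
   as (X_t (x) F_t) (x) Y_t. *)
Definition round (t : nat) (Ej : 'M[C]_(dB, dA))
    (v : 'cV[C]_(xd c t * fd c t * yd c t)) :
    'cV[C]_(xd c t.+1 * fd c t.+1 * yd c t.+1) :=
  idx_mx (@reassoc_idx (xd c t.+1) (fd c t.+1) (yd c t.+1))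
  *m ((1%:M : 'M[C]_(xd c t.+1)) *t decW c t)
  *m idx_mx (@reorder_idx dB (xd c t.+1) (yd c t))
  *m ((Ej *t (1%:M : 'M[C]_(xd c t.+1))) *t (1%:M : 'M[C]_(yd c t)))
  *m ((encU c m t *t (1%:M : 'M[C]_(yd c t))) *m v).

(* Q |phi> after t rounds, for Kraus operators Es 0, Es 1, ... in rounds 1, 2, ... *)
Fixpoint branch (Es : nat -> 'M[C]_(dB, dA)) (t : nat) :
    'cV[C]_(xd c t * fd c t * yd c t) :=
  match t with
  | 0%N => phi c
  | t'.+1 => @round t' (Es t') (branch Es t')
  end.

Definition kraus_at k (E : 'I_k -> 'M[C]_(dB, dA)) (js : {ffun 'I_n -> 'I_k})
    (t : nat) : 'M[C]_(dB, dA) :=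
  if @insub nat (fun i => (i < n)%N) 'I_n t is Some i then E (js i) else 0.

(* Bob's final state rho^(m) on Y_n:
   sum_{j_1..j_n} tr_{X_n (x) F_n} (Q |phi><phi| Q^dagger)  (dim F_n = 1). *)
Definition final_state k (E : 'I_k -> 'M[C]_(dB, dA)) : 'M[C]_(yd c n) :=
  \sum_(js : {ffun 'I_n -> 'I_k})
     ptrace1 (branch (kraus_at E js) n *m adjmx (branch (kraus_at E js) n)).

End Run.

Definition zero_error dA dB n M k (E : 'I_k -> 'M[C]_(dB, dA))
    (c : fcode dA dB n M) : Prop :=
  forall m m' : 'I_M, m != m' -> orth_supports (final_state c m E) (final_state c m' E).

End QDefs.

Local Open Scope ereal_scope.

(* base-2 logarithm on extended reals, with log 0 = -oo, log +oo = +oo *)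
Definition elog2 (R : realType) (x : \bar R) : \bar R :=
  match x with
  | r%:E => if (0 < r)%R then (ln r / ln 2)%:E else -oo
  | +oo => +oo
  | -oo => -oo
  end.

Definition Mf (R : realType) (C : numClosedFieldType) dA dB k
    (E : 'I_k -> 'M[C]_(dB, dA)) (n : nat) : \bar R :=
  ereal_sup [set (M%:R)%:E | M in [set M : nat |
               exists c : fcode C dA dB n M, zero_error E c]].

(* (1/n) log M_f(n; N) for n = N'.+1 >= 1 (sequence indexed from n = 1). *)
Definition rate_seq (R : realType) (C : numClosedFieldType) dA dB k
    (E : 'I_k -> 'M[C]_(dB, dA)) (N' : nat) : \bar R :=
  elog2 (Mf R E N'.+1) * ((N'.+1)%:R^-1)%:E.

Definition C0EF (R : realType) (C : numClosedFieldType) dA dB k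
    (E : 'I_k -> 'M[C]_(dB, dA)) : \bar R :=
  ereal_sup (range (rate_seq R E)).

(* Main.v *)
Require Import Defs.
From HB Require Import structures.
From mathcomp Require Import all_boot all_order all_algebra.
From mathcomp Require Import mxtens.
From mathcomp Require Import all_classical all_reals all_analysis.
From mathcomp Require Import lra.
Set Implicit Arguments.
Unset Strict Implicit.
Unset Printing Implicit Defensive.
Import Order.TTheory GRing.Theory Num.Theory.
Local Open Scope ring_scope.

Section PA.
Variable C : numClosedFieldType.

Lemma adjmxE m n (A : 'M[C]_(m,n)) i j : adjmx A i j = (A j i)^*.
Proof. by rewrite /adjmx !mxE. Qed.

Lemma adjmxK m n (A : 'M[C]_(m,n)) : adjmx (adjmx A) = A.
Proof. by apply/matrixP=> i j; rewrite !adjmxE conjCK. Qed.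

Lemma adjmxM m n p (A : 'M[C]_(m,n)) (B : 'M[C]_(n,p)) :
  adjmx (A *m B) = adjmx B *m adjmx A.
Proof.
apply/matrixP=> i j; rewrite adjmxE !mxE rmorph_sum; apply: eq_bigr=> k _.
by rewrite !adjmxE rmorphM mulrC.
Qed.

Lemma adjmxD m n (A B : 'M[C]_(m,n)) : adjmx (A + B) = adjmx A + adjmx B.
Proof. by apply/matrixP=> i j; rewrite !mxE /= rmorphD. Qed.

Lemma adjmx0 m n : adjmx (0 : 'M[C]_(m,n)) = 0.
Proof. by apply/matrixP=> i j; rewrite !mxE /= rmorph0. Qed.

Lemma adjmxZ m n a (A : 'M[C]_(m,n)) : adjmx (a *: A) = a^* *: adjmx A.
Proof. by apply/matrixP=> i j; rewrite !mxE /= rmorphM. Qed.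

Lemma adjmx_sum m n (I : finType) (F : I -> 'M[C]_(m,n)) :
  adjmx (\sum_i F i) = \sum_i adjmx (F i).
Proof.
elim/big_rec2: _ => [|i x y _ <-]; first by rewrite adjmx0.
by rewrite adjmxD.
Qed.

Lemma adjmx_eq0 m n (A : 'M[C]_(m,n)) : (adjmx A == 0) = (A == 0).
Proof.
apply/eqP/eqP=> [h|->]; last exact: adjmx0.
by rewrite -[A]adjmxK h adjmx0.
Qed.

Lemma orth_sumP m (I J : finType) (a : I -> 'cV[C]_m) (b : J -> 'cV[C]_m) :
  orth_supports (\sum_i a i *m adjmx (a i)) (\sum_j b j *m adjmx (b j)) <->
  (forall i j, adjmx (a i) *m b j = 0).
Proof.
set A := \sum_i _; set B := \sum_j _.
have hA : adjmx A = A.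
  rewrite /A adjmx_sum; apply: eq_bigr=> i _; by rewrite adjmxM adjmxK.
split=> [h|h u v]; last first.
  have AB : A *m B = 0.
    rewrite /A mulmx_suml big1 // => i _; rewrite /B mulmx_sumr big1 // => j _.
    by rewrite -!mulmxA (mulmxA (adjmx (a i))) h mul0mx !mulmx0.
  by rewrite adjmxM hA -mulmxA (mulmxA A) AB mul0mx mulmx0.
have AB : A *m B = 0.
  apply/matrixP=> k l; have := h (delta_mx k 0) (delta_mx l 0).
  rewrite adjmxM hA -mulmxA (mulmxA A) mulmxA.
  have -> : adjmx (delta_mx k 0 : 'cV[C]_m) = delta_mx 0 k.
    by apply/matrixP=> p q; rewrite adjmxE !mxE andbC rmorph_nat.
  rewrite -rowE -colE => /(congr1 (fun M : 'M[C]_(1,1) => M 0 0)).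
  by rewrite !mxE.
have trterm i j : \tr (a i *m adjmx (a i) *m (b j *m adjmx (b j))) =
     (adjmx (a i) *m b j) 0 0 * ((adjmx (a i) *m b j) 0 0)^*.
  rewrite -!mulmxA mxtrace_mulC -!mulmxA /mxtrace big_ord1.
  have -> : adjmx (b j) *m a i = adjmx (adjmx (a i) *m b j) by rewrite adjmxM adjmxK.
  by rewrite mulmxA mxE big_ord1 adjmxE.
have tr0 : \tr (A *m B) = \sum_i \sum_j ((adjmx (a i) *m b j) 0 0 *
                        ((adjmx (a i) *m b j) 0 0)^*).
  rewrite /A /B mulmx_suml raddf_sum; apply: eq_bigr=> i _.
  rewrite mulmx_sumr raddf_sum; apply: eq_bigr=> j _.
  exact: trterm.
move=> i j; apply/matrixP=> p q; rewrite !ord1 [RHS]mxE.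
have := tr0; rewrite AB mxtrace0 => /esym H.
have H1 : forall i, true -> 0 <= \sum_j ((adjmx (a i) *m b j) 0 0 *
                        ((adjmx (a i) *m b j) 0 0)^*).
  by move=> i' _; apply: sumr_ge0 => j' _; exact: mul_conjC_ge0.
have := psumr_eq0P H1 H (i := i) isT.
have H2 : forall j, true -> 0 <= ((adjmx (a i) *m b j) 0 0 *
                        ((adjmx (a i) *m b j) 0 0)^*).
  by move=> j' _; exact: mul_conjC_ge0.
move=> H3; have /eqP := psumr_eq0P H2 H3 (i := j) isT.
by rewrite mul_conjC_eq0 => /eqP.
Qed.

End PA.

Section PB.
Variable C : numClosedFieldType.

Definition wvec a b (v : 'cV[C]_(a * b)) (l : 'I_a) : 'cV[C]_b :=
  \col_i v (mxtens_index (l, i)) 0.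

Lemma ptrace_outer a b (v : 'cV[C]_(a * b)) :
  ptrace1 (v *m adjmx v) = \sum_l wvec v l *m adjmx (wvec v l).
Proof.
apply/matrixP=> i j; rewrite mxE summxE; apply: eq_bigr=> l _.
by rewrite !mxE !big_ord1 !adjmxE !mxE.
Qed.

Lemma tensmx_lin_l k m n p q (c : 'I_k -> C) (G : 'I_k -> 'M[C]_(m,n))
   (B : 'M[C]_(p,q)) :
  (\sum_j c j *: G j) *t B = \sum_j c j *: (G j *t B).
Proof.
apply/matrixP=> i l; rewrite !mxE summxE mulr_suml summxE; apply: eq_bigr=> j _.
by rewrite !mxE mulrA.
Qed.

Section Code.
Variables (dA dB n M : nat) (cd : fcode C dA dB n M).
Local Notation rnd m t := (@round C dA dB n M cd m t).

Lemma roundE m t Ej v : @round C dA dB n M cd m t Ej v =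
  (idx_mx C (@reassoc_idx (xd cd t.+1) (fd cd t.+1) (yd cd t.+1))
  *m ((1%:M : 'M[C]_(xd cd t.+1)) *t decW cd t)
  *m idx_mx C (@reorder_idx dB (xd cd t.+1) (yd cd t))
  *m ((Ej *t (1%:M : 'M[C]_(xd cd t.+1))) *t (1%:M : 'M[C]_(yd cd t)))
  *m (encU cd m t *t (1%:M : 'M[C]_(yd cd t)))) *m v.
Proof. by rewrite /round !mulmxA. Qed.

Lemma round_lin_v m t Ej k (c : 'I_k -> C) (v : 'I_k -> 'cV[C]_(xd cd t * fd cd t * yd cd t)) :
  rnd m t Ej (\sum_j c j *: v j) = \sum_j c j *: rnd m t Ej (v j).
Proof.
rewrite roundE mulmx_sumr; apply: eq_bigr=> j _; by rewrite roundE scalemxAr.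
Qed.

Lemma round_lin_E m t k (c : 'I_k -> C) (G : 'I_k -> 'M[C]_(dB, dA)) v :
  rnd m t (\sum_j c j *: G j) v = \sum_j c j *: rnd m t (G j) v.
Proof.
rewrite /round tensmx_lin_l tensmx_lin_l.
rewrite mulmx_sumr mulmx_suml; apply: eq_bigr=> j _.
by rewrite -scalemxAr -scalemxAl.
Qed.

Lemma branch_ext m (Es Fs : nat -> 'M[C]_(dB, dA)) T :
  (forall t, (t < T)%N -> Es t = Fs t) -> branch cd m Es T = branch cd m Fs T.
Proof.
elim: T=> [//|T IH] h /=.
by rewrite h // IH // => t ht; apply: h; apply: ltnW.
Qed.

Definition upd (Es : nat -> 'M[C]_(dB, dA)) t X := fun s => if s == t then X else Es s.

Lemma branch_lin m Es t k (c : 'I_k -> C) (G : 'I_k -> 'M[C]_(dB, dA)) T :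
  (t < T)%N ->
  branch cd m (upd Es t (\sum_j c j *: G j)) T =
  \sum_j c j *: branch cd m (upd Es t (G j)) T.
Proof.
elim: T=> [//|T IH] ht /=.
case: (ltngtP t T) ht => [lt_tT|lt_Tt|<-] ht; [|by rewrite ltnS leqNgt lt_Tt in ht|].
  have e : forall X, upd Es t X T = Es T by move=> X; rewrite /upd (gtn_eqF lt_tT).
  rewrite e IH // round_lin_v; apply: eq_bigr=> j _; by rewrite e.
have e : forall X, upd Es t X t = X by move=> X; rewrite /upd eqxx.
rewrite e round_lin_E; apply: eq_bigr=> j _.
rewrite e; congr (_ *: rnd _ _ _ _).
by apply: branch_ext=> s hs; rewrite /upd (ltn_eqF hs).
Qed.

End Code.

Lemma multilin_transfer (n k p q r s : nat) (E : 'I_k -> 'M[C]_(p,q))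
  (f : (nat -> 'M[C]_(p,q)) -> 'M[C]_(r,s)) :
  (forall Es t (c : 'I_k -> C), (t < n)%N ->
     f (fun s => if s == t then \sum_j c j *: E j else Es s) =
     \sum_j c j *: f (fun s => if s == t then E j else Es s)) ->
  (forall Es, (forall t, (t < n)%N -> exists j, Es t = E j) -> f Es = 0) ->
  forall Es, (forall t, (t < n)%N -> exists c : 'I_k -> C, Es t = \sum_j c j *: E j) ->
  f Es = 0.
Proof.
move=> hlin hbase.
suff H : forall d Es, (forall t, (t < n)%N ->
   ((t < d)%N -> exists c : 'I_k -> C, Es t = \sum_j c j *: E j) /\
   ((d <= t)%N -> exists j, Es t = E j)) -> f Es = 0.
  move=> Es hEs; apply: (H n)=> t ht; split=> //; first by move=> _; exact: hEs.
  by rewrite leqNgt ht.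
elim=> [|d IH] Es hEs.
  by apply: hbase=> t ht; apply: (hEs t ht).2.
case: (ltnP d n) => hdn; last first.
  apply: IH=> t ht; split; first by move=> _; apply: (hEs t ht).1; apply: ltn_trans ht _; rewrite ltnS.
  by move=> hdt; have := leq_trans hdn hdt; rewrite leqNgt ht.
have [c hc] := (hEs d hdn).1 (ltnSn d).
have -> : Es = (fun s => if s == d then \sum_j c j *: E j else Es s).
  by apply: funext=> s0; case: eqP=> // ->.
rewrite hlin // big1 // => j _.
rewrite IH ?scaler0 // => t ht; split=> [htd|hdt].
  have htd' : t != d by rewrite ltn_eqF.
  rewrite (negbTE htd'); apply: (hEs t ht).1; exact: ltnW.
case: eqP=> [_|/eqP ntd]; first by exists j.
apply: (hEs t ht).2; by rewrite ltn_neqAle eq_sym ntd hdt.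
Qed.

End PB.

Section PC.
Variable C : numClosedFieldType.

Lemma wvec_lin a b k (c : 'I_k -> C) (v : 'I_k -> 'cV[C]_(a * b)) l :
  wvec (\sum_j c j *: v j) l = \sum_j c j *: wvec (v j) l.
Proof.
apply/matrixP=> i z; rewrite !mxE summxE summxE; apply: eq_bigr=> j _.
by rewrite !mxE.
Qed.

Section Code.
Variables (dA dB n M : nat) (cd : fcode C dA dB n M).

Definition Zgen (S : 'M[C]_(dB, dA) -> Prop) :=
  forall m m' : 'I_M, m != m' -> forall Es Fs : nat -> 'M[C]_(dB, dA),
  (forall t, (t < n)%N -> S (Es t)) -> (forall t, (t < n)%N -> S (Fs t)) ->
  forall l l', adjmx (wvec (branch cd m Es n) l) *m wvec (branch cd m' Fs n) l' = 0.

Lemma final_stateE m k (E : 'I_k -> 'M[C]_(dB, dA)) :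
  final_state cd m E = \sum_(p : {ffun 'I_n -> 'I_k} * 'I_(xd cd n * fd cd n))
     wvec (branch cd m (kraus_at E p.1) n) p.2 *m
     adjmx (wvec (branch cd m (kraus_at E p.1) n) p.2).
Proof.
rewrite /final_state (eq_bigr _ (fun js _ => ptrace_outer _)).
by rewrite pair_bigA.
Qed.

Lemma kraus_at_in k (E : 'I_k -> 'M[C]_(dB, dA)) (js : {ffun 'I_n -> 'I_k}) t : (t < n)%N ->
  exists j, kraus_at E js t = E j.
Proof.
move=> ht; rewrite /kraus_at insubT /=; by eexists.
Qed.

Lemma zero_error_Zgen k (E : 'I_k -> 'M[C]_(dB, dA)) :
  zero_error E cd <-> Zgen (fun X => exists j, X = E j).
Proof.
split=> [hz m m' nm Es Fs hE hF l l'|hZ m m' nm].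
  have := hz m m' nm; rewrite !final_stateE => /orth_sumP hw.
  have [je hje] : exists js : {ffun 'I_n -> 'I_k}, forall i : 'I_n, Es i = E (js i).
    have [f hf] := fin_all_exists (fun i : 'I_n => hE i (ltn_ord i)).
    by exists [ffun i => f i]=> i; rewrite ffunE.
  have [jf hjf] : exists js : {ffun 'I_n -> 'I_k}, forall i : 'I_n, Fs i = E (js i).
    have [f hf] := fin_all_exists (fun i : 'I_n => hF i (ltn_ord i)).
    by exists [ffun i => f i]=> i; rewrite ffunE.
  have -> : branch cd m Es n = branch cd m (kraus_at E je) n.
    apply: branch_ext=> t ht; rewrite /kraus_at insubT /=.
    by rewrite (hje (Ordinal ht)).
  have -> : branch cd m' Fs n = branch cd m' (kraus_at E jf) n.
    apply: branch_ext=> t ht; rewrite /kraus_at insubT /=.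
    by rewrite (hjf (Ordinal ht)).
  exact: (hw (je, l) (jf, l')).
rewrite !final_stateE; apply/orth_sumP=> [[js l] [js' l']] /=.
by apply: hZ=> // t ht; apply: kraus_at_in.
Qed.

Lemma Zgen_span k (E : 'I_k -> 'M[C]_(dB, dA)) :
  Zgen (fun X => exists j, X = E j) ->
  Zgen (fun X => exists c : 'I_k -> C, X = \sum_j c j *: E j).
Proof.
move=> hZ m m' nm Es Fs hE hF l l'.
have step1 : forall Es0, (forall t, (t < n)%N -> exists j, Es0 t = E j) ->
    adjmx (wvec (branch cd m Es0 n) l) *m wvec (branch cd m' Fs n) l' = 0.
  move=> Es0 hE0.
  apply: (multilin_transfer (n := n) (E := E) (f := fun Fs0 =>
     adjmx (wvec (branch cd m Es0 n) l) *m wvec (branch cd m' Fs0 n) l')) => //.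
  - move=> Gs t c ht /=.
    have := branch_lin cd m' Gs c E ht; rewrite /upd => ->.
    by rewrite wvec_lin mulmx_sumr; apply: eq_bigr=> j _; rewrite scalemxAr.
  - by move=> Gs hG; apply: hZ.
apply/eqP; rewrite -adjmx_eq0; apply/eqP.
apply: (multilin_transfer (n := n) (E := E) (f := fun Es0 =>
     adjmx (adjmx (wvec (branch cd m Es0 n) l) *m wvec (branch cd m' Fs n) l'))) => //.
- move=> Gs t c ht /=.
  have := branch_lin cd m Gs c E ht; rewrite /upd => ->.
  rewrite wvec_lin adjmxM adjmxK mulmx_sumr; apply: eq_bigr=> j _.
  by rewrite adjmxM adjmxK scalemxAr.
- by move=> Gs hG; rewrite step1 // adjmx0.
Qed.

Lemma Zgen_mono (S S' : 'M[C]_(dB, dA) -> Prop) :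
  (forall X, S' X -> S X) -> Zgen S -> Zgen S'.
Proof.
move=> hS hZ m m' nm Es Fs hE hF; apply: hZ=> // t ht; apply: hS; [exact: hE|exact: hF].
Qed.

End Code.

Lemma span_of_submx dB dA k k' (E : 'I_k -> 'M[C]_(dB, dA)) (E' : 'I_k' -> 'M[C]_(dB, dA)) :
  (kraus_mx E' <= kraus_mx E)%MS ->
  forall j, exists c : 'I_k -> C, E' j = \sum_i c i *: E i.
Proof.
move=> /submxP [D hD] j; exists (fun i => D j i).
apply: (can_inj mxvecK); rewrite linear_sum /=.
have := congr1 (row j) hD; rewrite /kraus_mx rowK row_mul mulmx_sum_row => ->.
by apply: eq_bigr=> i _; rewrite linearZ /= rowK mxE.
Qed.

Lemma zero_error_transfer dA dB n M k k' (E : 'I_k -> 'M[C]_(dB, dA))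
  (E' : 'I_k' -> 'M[C]_(dB, dA)) (cd : fcode C dA dB n M) :
  (kraus_mx E == kraus_mx E')%MS -> zero_error E cd -> zero_error E' cd.
Proof.
move=> /andP [_ h] /zero_error_Zgen /Zgen_span hZ; apply/zero_error_Zgen.
apply: Zgen_mono hZ => X [j ->]; exact: span_of_submx.
Qed.

End PC.

Section PD.
Variable C : numClosedFieldType.

Lemma sum_pair a b (F : 'I_(a * b) -> C) :
  \sum_k F k = \sum_(i < a) \sum_(j < b) F (mxtens_index (i, j)).
Proof.
rewrite pair_bigA /= (reindex (fun p : 'I_a * 'I_b => mxtens_index p)) /=.
  by apply: eq_bigr=> [[i j]] _.
by exists (@mxtens_unindex a b)=> x _; [apply: mxtens_indexK|apply: mxtens_unindexK].
Qed.

Lemma sum_delta n (j : 'I_n) (F : 'I_n -> C) :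
  \sum_k (1 *+ (j == k)) * F k = F j.
Proof.
rewrite (bigD1 j) //= eqxx mulr1n mul1r big1 ?addr0 // => k nk.
by rewrite eq_sym (negbTE nk) mulr0n mul0r.
Qed.

Lemma idx_mulE m n (g : 'I_n -> 'I_m) (ginj : injective g) k0 (w : 'cV[C]_n) :
  (idx_mx C g *m w) (g k0) 0 = w k0 0.
Proof.
rewrite mxE (bigD1 k0) //= mxE eqxx mul1r big1 ?addr0 // => k nk.
rewrite mxE; case: eqP=> [/ginj e|_]; last by rewrite mul0r.
by rewrite e eqxx in nk.
Qed.

Lemma reassoc_idxE x f y (i : 'I_x) (l : 'I_f) (j : 'I_y) :
  reassoc_idx (mxtens_index (i, mxtens_index (l, j))) =
  mxtens_index (mxtens_index (i, l), j).
Proof. by rewrite /reassoc_idx !mxtens_indexK. Qed.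

Lemma reorder_idxE b x y (i : 'I_b) (l : 'I_x) (j : 'I_y) :
  reorder_idx (mxtens_index (mxtens_index (i, l), j)) =
  mxtens_index (l, mxtens_index (j, i)).
Proof. by rewrite /reorder_idx !mxtens_indexK. Qed.

Lemma mxtens_index_inj a b : injective (@mxtens_index a b).
Proof. exact: can_inj (@mxtens_indexK a b). Qed.

Lemma reassoc_inj x f y : injective (@reassoc_idx x f y).
Proof.
move=> k1 k2; case: (mxtens_indexP k1)=> i1 fy1; case: (mxtens_indexP fy1)=> l1 j1.
case: (mxtens_indexP k2)=> i2 fy2; case: (mxtens_indexP fy2)=> l2 j2.
rewrite !reassoc_idxE => /mxtens_index_inj/pair_equal_spec [/mxtens_index_inj/pair_equal_spec [-> ->] ->] //.
Qed.

Lemma reorder_inj b x y : injective (@reorder_idx b x y).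
Proof.
move=> k1 k2; case: (mxtens_indexP k1)=> i1 fy1; case: (mxtens_indexP i1)=> l1 j1.
case: (mxtens_indexP k2)=> i2 fy2; case: (mxtens_indexP i2)=> l2 j2.
rewrite !reorder_idxE => /mxtens_index_inj/pair_equal_spec [-> /mxtens_index_inj/pair_equal_spec [-> ->]] //.
Qed.

Lemma tens1mulE m n q (A : 'M[C]_(m, n)) (v : 'cV[C]_(n * q)) i j :
  ((A *t (1%:M : 'M[C]_q)) *m v) (mxtens_index (i, j)) 0 =
  \sum_k A i k * v (mxtens_index (k, j)) 0.
Proof.
rewrite mxE sum_pair; apply: eq_bigr=> k _.
rewrite (eq_bigr (fun l => (1 *+ (j == l)) * (A i k * v (mxtens_index (k, l)) 0))).
  by rewrite sum_delta.
by move=> l _; rewrite tensmxE mxE mulrCA mulrA.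
Qed.

Lemma mul1tensE m n q (B : 'M[C]_(m, n)) (v : 'cV[C]_(q * n)) i j :
  (((1%:M : 'M[C]_q) *t B) *m v) (mxtens_index (i, j)) 0 =
  \sum_k B j k * v (mxtens_index (i, k)) 0.
Proof.
rewrite mxE sum_pair exchange_big /=; apply: eq_bigr=> k _.
rewrite (eq_bigr (fun l => (1 *+ (i == l)) * (B j k * v (mxtens_index (l, k)) 0))).
  by rewrite sum_delta.
by move=> l _; rewrite tensmxE mxE mulrA.
Qed.

Section Code.
Variables (dA dB n M : nat) (cd : fcode C dA dB n M).
Local Notation rnd m t := (@round C dA dB n M cd m t).

Lemma round_ordE m t Ej v x' f' y' :
  rnd m t Ej v (mxtens_index (mxtens_index (x', f'), y')) 0 =
  \sum_(y < yd cd t) \sum_(b < dB) decW cd t (mxtens_index (f', y')) (mxtens_index (y, b)) *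
    (\sum_(a < dA) Ej b a * \sum_(kk < xd cd t * fd cd t)
        encU cd m t (mxtens_index (a, x')) kk * v (mxtens_index (kk, y)) 0).
Proof.
rewrite /round -!mulmxA -reassoc_idxE idx_mulE; last exact: reassoc_inj.
rewrite mul1tensE sum_pair; apply: eq_bigr=> y _; apply: eq_bigr=> b _.
congr (_ * _).
rewrite -reorder_idxE idx_mulE; last exact: reorder_inj.
rewrite tens1mulE sum_pair; apply: eq_bigr=> a _.
rewrite (eq_bigr (fun l => (1 *+ (x' == l)) * (Ej b a *
      ((encU cd m t *t 1%:M) *m v) (mxtens_index (mxtens_index (a, l), y)) 0))).
  by rewrite sum_delta tens1mulE mulr_sumr.
by move=> l _; rewrite tensmxE mxE mulrCA mulrA.
Qed.

End Code.
End PD.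

Section PE.
Variable C : numClosedFieldType.

Definition ent p q (A : 'M[C]_(p, q)) (i j : nat) : C :=
  if @insub nat (fun x => (x < p)%N) 'I_p i is Some a then
    if @insub nat (fun x => (x < q)%N) 'I_q j is Some b then A a b else 0
  else 0.

Lemma entE p q (A : 'M[C]_(p, q)) (a : 'I_p) (b : 'I_q) : ent A a b = A a b.
Proof. by rewrite /ent !valK. Qed.

Lemma ent_outl p q (A : 'M[C]_(p, q)) i j : (p <= i)%N -> ent A i j = 0.
Proof. by move=> h; rewrite /ent insubF // ltnNge h. Qed.

Lemma ent_outr p q (A : 'M[C]_(p, q)) i j : (q <= j)%N -> ent A i j = 0.
Proof. by move=> h; rewrite /ent; case: insubP=> // a _ _; rewrite insubF // ltnNge h. Qed.

Definition mkmx p q (g : nat -> nat -> C) : 'M[C]_(p, q) := \matrix_(i, j) g i j.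

Lemma ent_mkmx p q g i j : (i < p)%N -> (j < q)%N -> ent (mkmx p q g) i j = g i j.
Proof. by move=> hi hj; rewrite /ent insubT /= insubT /= mxE. Qed.

Lemma sum_nat_ord N (F : nat -> C) : \sum_(0 <= i < N) F i = \sum_(i < N) F i.
Proof. by rewrite big_mkord. Qed.

Lemma sum_nat_pair a b (F : nat -> C) :
  \sum_(0 <= k < a * b) F k = \sum_(0 <= i < a) \sum_(0 <= j < b) F (i * b + j)%N.
Proof.
rewrite !big_mkord sum_pair; apply: eq_bigr=> i _; by rewrite big_mkord.
Qed.

Lemma sum_nat_delta N x (F : nat -> C) : (x < N)%N ->
  \sum_(0 <= y < N) (x == y)%:R * F y = F x.
Proof.
move=> hx; rewrite big_mkord (bigD1 (Ordinal hx)) //= eqxx mul1r big1 ?addr0 //.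
by move=> k nk; rewrite eq_sym; case: eqP=> [e|]; [case/eqP: nk; apply: val_inj|rewrite mul0r].
Qed.

Lemma sum_nat_delta_r N x (F : nat -> C) : (x < N)%N ->
  \sum_(0 <= y < N) F y * (x == y)%:R = F x.
Proof.
move=> hx; rewrite -(sum_nat_delta F hx); apply: eq_bigr=> y _; by rewrite mulrC.
Qed.

Lemma isometryP p q (A : 'M[C]_(p, q)) :
  Defs.isometry A <-> forall j j', (j < q)%N -> (j' < q)%N ->
     \sum_(0 <= i < p) (ent A i j)^* * ent A i j' = (j == j')%:R.
Proof.
split=> [h j j' hj hj'|h].
  have := congr1 (fun B : 'M[C]_q => B (Ordinal hj) (Ordinal hj')) h.
  rewrite !mxE => <-; rewrite big_mkord; apply: eq_bigr=> i _.
  by rewrite !mxE -!(entE A i (Ordinal _)).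
apply/matrixP=> j j'; rewrite !mxE -(h j j') //.
rewrite big_mkord; apply: eq_bigr=> i _; by rewrite !mxE !entE.
Qed.

Section Code.
Variables (dA dB n M : nat) (cd : fcode C dA dB n M).
Local Notation rnd m t := (@round C dA dB n M cd m t).

Lemma round_natE m t Ej v x' f' y' :
  (x' < xd cd t.+1)%N -> (f' < fd cd t.+1)%N -> (y' < yd cd t.+1)%N ->
  ent (rnd m t Ej v) ((x' * fd cd t.+1 + f') * yd cd t.+1 + y') 0 =
  \sum_(0 <= y < yd cd t) \sum_(0 <= b < dB)
    ent (decW cd t) (f' * yd cd t.+1 + y') (y * dB + b) *
    (\sum_(0 <= a < dA) ent Ej b a * \sum_(0 <= kk < xd cd t * fd cd t)
        ent (encU cd m t) (a * xd cd t.+1 + x') kk * ent v (kk * yd cd t + y) 0).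
Proof.
move=> hx hf hy.
have -> := entE (rnd m t Ej v) (mxtens_index (mxtens_index (Ordinal hx, Ordinal hf), Ordinal hy)) 0.
rewrite round_ordE big_mkord; apply: eq_bigr=> y _; rewrite big_mkord; apply: eq_bigr=> b _.
rewrite -(entE (decW cd t) (mxtens_index (Ordinal hf, Ordinal hy)) (mxtens_index (y, b))) /=.
congr (_ * _); rewrite big_mkord; apply: eq_bigr=> a _.
rewrite entE; congr (_ * _); rewrite big_mkord; apply: eq_bigr=> kk _.
rewrite -(entE (encU cd m t) (mxtens_index (a, Ordinal hx)) kk) /=.
by rewrite -(entE v (mxtens_index (kk, y)) 0).
Qed.

End Code.
End PE.

Lemma enc_lt x y A B : (x < A)%N -> (y < B)%N -> (x * B + y < A * B)%N.
Proof. by move=> hx hy; exact: (mxtens_index_proof (Ordinal hx, Ordinal hy)). Qed.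

Lemma hiE x y B : (y < B)%N -> ((x * B + y) %/ B = x)%N.
Proof. by move=> hy; rewrite divnMDl ?divn_small ?addn0 //; apply: leq_ltn_trans hy. Qed.

Lemma loE x y B : (y < B)%N -> ((x * B + y) %% B = y)%N.
Proof. by move=> hy; rewrite modnMDl modn_small. Qed.

Lemma lt1 x : (x < 1)%N -> x = 0%N.
Proof. by case: x. Qed.

Section PF.
Variable C : numClosedFieldType.
Variables (dA dB n1 n2 M1 M2 : nat) (c1 : fcode C dA dB n1 M1) (c2 : fcode C dA dB n2 M2).

Definition cX t := (xd c1 (minn t n1) * xd c2 (t - n1))%N.
Definition cF t := (fd c1 (minn t n1) * fd c2 (t - n1))%N.
Definition cY t := (yd c1 (minn t n1) * yd c2 (t - n1))%N.

Definition dv N i := (i %/ N)%N.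
Definition md N i := (i %% N)%N.

Definition cphi : 'cV[C]_(cX 0 * cF 0 * cY 0) := mkmx _ _ (fun i _ =>
  let xf := dv (cY 0) i in let y := md (cY 0) i in
  let xx := dv (cF 0) xf in let ff := md (cF 0) xf in
  ent (phi c1) ((dv (xd c2 0) xx * fd c1 (minn 0 n1) + dv (fd c2 0) ff) * yd c1 (minn 0 n1)
                 + dv (yd c2 0) y) 0 *
  ent (phi c2) ((md (xd c2 0) xx * fd c2 0 + md (fd c2 0) ff) * yd c2 0 + md (yd c2 0) y) 0).

Definition cU (m : 'I_(M1 * M2)) t : 'M[C]_(dA * cX t.+1, cX t * cF t) := mkmx _ _ (fun i j =>
  let a := dv (cX t.+1) i in let x' := md (cX t.+1) i in
  let x1' := dv (xd c2 (t.+1 - n1)) x' in let x2' := md (xd c2 (t.+1 - n1)) x' in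
  let xx := dv (cF t) j in let ff := md (cF t) j in
  let x1 := dv (xd c2 (t - n1)) xx in let x2 := md (xd c2 (t - n1)) xx in
  let f1 := dv (fd c2 (t - n1)) ff in let f2 := md (fd c2 (t - n1)) ff in
  if (t < n1)%N then
    ent (encU c1 (mxtens_unindex m).1 t) (a * xd c1 t.+1 + x1') (x1 * fd c1 t + f1) * (x2' == x2)%:R
  else
    ent (encU c2 (mxtens_unindex m).2 (t - n1)) (a * xd c2 (t - n1).+1 + x2') (x2 * fd c2 (t - n1) + f2)
      * (x1' == x1)%:R).

Definition cW t : 'M[C]_(cF t.+1 * cY t.+1, cY t * dB) := mkmx _ _ (fun i j =>
  let ff' := dv (cY t.+1) i in let yy' := md (cY t.+1) i in
  let f1' := dv (fd c2 (t.+1 - n1)) ff' in let f2' := md (fd c2 (t.+1 - n1)) ff' in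
  let y1' := dv (yd c2 (t.+1 - n1)) yy' in let y2' := md (yd c2 (t.+1 - n1)) yy' in
  let yy := dv dB j in let b := md dB j in
  let y1 := dv (yd c2 (t - n1)) yy in let y2 := md (yd c2 (t - n1)) yy in
  if (t < n1)%N then
    ent (decW c1 t) (f1' * yd c1 t.+1 + y1') (y1 * dB + b) * (y2' == y2)%:R
  else
    ent (decW c2 (t - n1)) (f2' * yd c2 (t - n1).+1 + y2') (y2 * dB + b) * (y1' == y1)%:R).


Lemma enc3_lt x f y X F Y : (x < X)%N -> (f < F)%N -> (y < Y)%N -> ((x * F + f) * Y + y < X * F * Y)%N.
Proof. by move=> hx hf hy; apply: enc_lt=> //; apply: enc_lt. Qed.

Lemma cU_ph1 m t a x1 x2 x1o x2o f1o f2o : (t < n1)%N -> (a < dA)%N ->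
  (x1 < xd c1 (minn t.+1 n1))%N -> (x2 < xd c2 (t.+1 - n1))%N ->
  (x1o < xd c1 (minn t n1))%N -> (x2o < xd c2 (t - n1))%N ->
  (f1o < fd c1 (minn t n1))%N -> (f2o < fd c2 (t - n1))%N ->
  ent (cU m t) (a * cX t.+1 + (x1 * xd c2 (t.+1 - n1) + x2))
      ((x1o * xd c2 (t - n1) + x2o) * cF t + (f1o * fd c2 (t - n1) + f2o))
  = ent (encU c1 (mxtens_unindex m).1 t) (a * xd c1 t.+1 + x1) (x1o * fd c1 t + f1o)
    * (x2 == x2o)%:R.
Proof.
move=> ht ha hx1 hx2 hx1o hx2o hf1o hf2o.
rewrite ent_mkmx; last 2 first.
- by apply: enc_lt=> //; apply: enc_lt.
- by apply: enc_lt; apply: enc_lt.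
rewrite /= ht /dv /md !hiE ?loE ?hiE ?loE //; by apply: enc_lt.
Qed.

Lemma cU_ph2 m t a x1 x2 x1o x2o f1o f2o : (n1 <= t)%N -> (a < dA)%N ->
  (x1 < xd c1 (minn t.+1 n1))%N -> (x2 < xd c2 (t.+1 - n1))%N ->
  (x1o < xd c1 (minn t n1))%N -> (x2o < xd c2 (t - n1))%N ->
  (f1o < fd c1 (minn t n1))%N -> (f2o < fd c2 (t - n1))%N ->
  ent (cU m t) (a * cX t.+1 + (x1 * xd c2 (t.+1 - n1) + x2))
      ((x1o * xd c2 (t - n1) + x2o) * cF t + (f1o * fd c2 (t - n1) + f2o))
  = ent (encU c2 (mxtens_unindex m).2 (t - n1)) (a * xd c2 (t - n1).+1 + x2)
        (x2o * fd c2 (t - n1) + f2o) * (x1 == x1o)%:R.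
Proof.
move=> ht ha hx1 hx2 hx1o hx2o hf1o hf2o.
rewrite ent_mkmx; last 2 first.
- by apply: enc_lt=> //; apply: enc_lt.
- by apply: enc_lt; apply: enc_lt.
rewrite /= ltnNge ht /= /dv /md !hiE ?loE ?hiE ?loE //; last by apply: enc_lt.
all: by apply: enc_lt.
Qed.

Lemma cW_ph1 t f1 f2 y1 y2 y1o y2o b : (t < n1)%N ->
  (f1 < fd c1 (minn t.+1 n1))%N -> (f2 < fd c2 (t.+1 - n1))%N ->
  (y1 < yd c1 (minn t.+1 n1))%N -> (y2 < yd c2 (t.+1 - n1))%N ->
  (y1o < yd c1 (minn t n1))%N -> (y2o < yd c2 (t - n1))%N -> (b < dB)%N ->
  ent (cW t) ((f1 * fd c2 (t.+1 - n1) + f2) * cY t.+1 + (y1 * yd c2 (t.+1 - n1) + y2))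
      ((y1o * yd c2 (t - n1) + y2o) * dB + b)
  = ent (decW c1 t) (f1 * yd c1 t.+1 + y1) (y1o * dB + b) * (y2 == y2o)%:R.
Proof.
move=> ht hf1 hf2 hy1 hy2 hy1o hy2o hb.
rewrite ent_mkmx; last 2 first.
- by apply: enc_lt; apply: enc_lt.
- by apply: enc_lt=> //; apply: enc_lt.
rewrite /= ht /dv /md !hiE ?loE ?hiE ?loE //; by apply: enc_lt.
Qed.

Lemma cW_ph2 t f1 f2 y1 y2 y1o y2o b : (n1 <= t)%N ->
  (f1 < fd c1 (minn t.+1 n1))%N -> (f2 < fd c2 (t.+1 - n1))%N ->
  (y1 < yd c1 (minn t.+1 n1))%N -> (y2 < yd c2 (t.+1 - n1))%N ->
  (y1o < yd c1 (minn t n1))%N -> (y2o < yd c2 (t - n1))%N -> (b < dB)%N ->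
  ent (cW t) ((f1 * fd c2 (t.+1 - n1) + f2) * cY t.+1 + (y1 * yd c2 (t.+1 - n1) + y2))
      ((y1o * yd c2 (t - n1) + y2o) * dB + b)
  = ent (decW c2 (t - n1)) (f2 * yd c2 (t - n1).+1 + y2) (y2o * dB + b) * (y1 == y1o)%:R.
Proof.
move=> ht hf1 hf2 hy1 hy2 hy1o hy2o hb.
rewrite ent_mkmx; last 2 first.
- by apply: enc_lt; apply: enc_lt.
- by apply: enc_lt=> //; apply: enc_lt.
rewrite /= ltnNge ht /= /dv /md !hiE ?loE ?hiE ?loE //; last by apply: enc_lt.
all: by apply: enc_lt.
Qed.

End PF.

Section PG.
Variable C : numClosedFieldType.
Variables (dA dB n1 n2 M1 M2 : nat) (c1 : fcode C dA dB n1 M1) (c2 : fcode C dA dB n2 M2).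

Lemma cfd0 : cF c1 c2 0 = 1%N.
Proof. by rewrite /cF (minn_idPl (leq0n _)) !fd0. Qed.

Lemma cfdn : cF c1 c2 (n1 + n2) = 1%N.
Proof. by rewrite /cF (minn_idPr (leq_addr _ _)) addKn !fdn. Qed.

Variables (hphi : Defs.isometry (cphi c1 c2))
  (hU : forall m t, (t < n1 + n2)%N -> Defs.isometry (cU c1 c2 m t))
  (hW : forall t, (t < n1 + n2)%N -> Defs.isometry (cW c1 c2 t)).

Definition cc : fcode C dA dB (n1 + n2) (M1 * M2) :=
  @FCode C dA dB (n1 + n2) (M1 * M2) (cX c1 c2) (cY c1 c2) (cF c1 c2) cfd0 cfdn
    (cphi c1 c2) hphi (cU c1 c2) hU (cW c1 c2) hW.

Variables (m : 'I_(M1 * M2)) (Es : nat -> 'M[C]_(dB, dA)).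
Local Notation m1 := (mxtens_unindex m).1.
Local Notation m2 := (mxtens_unindex m).2.
Local Notation Es2 := (fun s => Es (s + n1)%N).

Definition PFt t := forall x1 x2 f1 f2 y1 y2,
  (x1 < xd c1 (minn t n1))%N -> (x2 < xd c2 (t - n1))%N ->
  (f1 < fd c1 (minn t n1))%N -> (f2 < fd c2 (t - n1))%N ->
  (y1 < yd c1 (minn t n1))%N -> (y2 < yd c2 (t - n1))%N ->
  ent (branch cc m Es t)
    (((x1 * xd c2 (t - n1) + x2) * cF c1 c2 t + (f1 * fd c2 (t - n1) + f2)) * cY c1 c2 t
       + (y1 * yd c2 (t - n1) + y2)) 0 =
  ent (branch c1 m1 Es (minn t n1)) ((x1 * fd c1 (minn t n1) + f1) * yd c1 (minn t n1) + y1) 0 *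
  ent (branch c2 m2 Es2 (t - n1)) ((x2 * fd c2 (t - n1) + f2) * yd c2 (t - n1) + y2) 0.

Lemma branchS (c : fcode C dA dB (n1 + n2) (M1 * M2)) Fs t :
  branch c m Fs t.+1 = round m (Fs t) (branch c m Fs t).
Proof. by []. Qed.

Lemma sum_nat_one N (F : nat -> C) : N = 1%N -> \sum_(0 <= i < N) F i = F 0%N.
Proof. by move=> ->; rewrite big_nat1. Qed.

Lemma step1 t : (t < n1)%N -> PFt t -> PFt t.+1.
Proof.
move=> ht IH x1 x2 f1 f2 y1 y2 hx1 hx2 hf1 hf2 hy1 hy2.
have e1 : minn t.+1 n1 = t.+1 by apply/minn_idPl.
have e0 : minn t n1 = t by apply/minn_idPl/ltnW.
have z1 : (t.+1 - n1 = 0)%N by apply/eqP; rewrite subn_eq0.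
have z0 : (t - n1 = 0)%N by apply/eqP; rewrite subn_eq0 ltnW.
have hF2 : fd c2 (t - n1) = 1%N by rewrite z0 fd0.
have f20 : f2 = 0%N by move: hf2; rewrite z1 fd0; case: f2.
have hxx : (x1 * xd c2 (t.+1 - n1) + x2 < xd cc t.+1)%N by apply: enc_lt.
have hff : (f1 * fd c2 (t.+1 - n1) + f2 < fd cc t.+1)%N by apply: enc_lt.
have hyy : (y1 * yd c2 (t.+1 - n1) + y2 < yd cc t.+1)%N by apply: enc_lt.
rewrite branchS [LHS](round_natE (cd := cc) _ _ _ hxx hff hyy).
rewrite (sum_nat_pair (yd c1 (minn t n1)) (yd c2 (t - n1))).
under eq_big_nat => y1o /andP[_ hy1o].
  under eq_big_nat => y2o /andP[_ hy2o].
    under eq_big_nat => b /andP[_ hb].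
      rewrite (cW_ph1 ht hf1 hf2 hy1 hy2 hy1o hy2o hb).
      under eq_big_nat => a /andP[_ ha].
        rewrite (sum_nat_pair (xd c1 (minn t n1) * xd c2 (t - n1)) (fd c1 (minn t n1) * fd c2 (t - n1))).
        rewrite (sum_nat_pair (xd c1 (minn t n1)) (xd c2 (t - n1))).
        under eq_big_nat => x1o /andP[_ hx1o].
          under eq_big_nat => x2o /andP[_ hx2o].
            rewrite (sum_nat_pair (fd c1 (minn t n1)) (fd c2 (t - n1))).
            under eq_big_nat => f1o /andP[_ hf1o].
              rewrite (sum_nat_one _ hF2).
              have hf2o : (0 < fd c2 (t - n1))%N by rewrite hF2.
              rewrite (cU_ph1 _ ht ha hx1 hx2 hx1o hx2o hf1o hf2o).
              rewrite (IH _ _ _ _ _ _ hx1o hx2o hf1o hf2o hy1o hy2o).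
              over.
            over.
          over.
        over.
      over.
    over.
  over.
rewrite e1 z1 in hx1 hf1 hy1 hx2 hy2 *; rewrite e0 z0 /=.
rewrite (round_natE (cd := c1) _ _ _ hx1 hf1 hy1) f20.
rewrite [RHS]mulr_suml; apply: eq_big_nat => y1o /andP[_ hy1o].
rewrite exchange_big [RHS]mulr_suml; apply: eq_big_nat => b /andP[_ hb] /=.
under eq_big_nat => y2o _ do rewrite mulrAC.
rewrite (sum_nat_delta_r _ hy2) -mulrA; congr (_ * _).
rewrite [RHS]mulr_suml; apply: eq_big_nat => a /andP[_ ha].
rewrite -mulrA; congr (_ * _).
rewrite (sum_nat_pair (xd c1 t) (fd c1 t)) [RHS]mulr_suml.
apply: eq_big_nat => x1o /andP[_ hx1o].
under eq_big_nat => x2o _ do under eq_big_nat => f1o _ do rewrite mulrAC.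
under eq_big_nat => x2o _ do rewrite -mulr_suml.
rewrite (sum_nat_delta_r _ hx2) [RHS]mulr_suml.
apply: eq_big_nat => f1o _; by rewrite !mulrA.
Qed.

Lemma step2 t : (n1 <= t)%N -> PFt t -> PFt t.+1.
Proof.
move=> ht IH x1 x2 f1 f2 y1 y2 hx1 hx2 hf1 hf2 hy1 hy2.
have e1 : minn t.+1 n1 = n1 by apply/minn_idPr/ltnW.
have e0 : minn t n1 = n1 by apply/minn_idPr.
have z1 : (t.+1 - n1 = (t - n1).+1)%N by rewrite subSn.
have hF1 : fd c1 (minn t n1) = 1%N by rewrite e0 fdn.
have f10 : f1 = 0%N by move: hf1; rewrite e1 fdn; case: f1.
have hxx : (x1 * xd c2 (t.+1 - n1) + x2 < xd cc t.+1)%N by apply: enc_lt.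
have hff : (f1 * fd c2 (t.+1 - n1) + f2 < fd cc t.+1)%N by apply: enc_lt.
have hyy : (y1 * yd c2 (t.+1 - n1) + y2 < yd cc t.+1)%N by apply: enc_lt.
rewrite branchS [LHS](round_natE (cd := cc) _ _ _ hxx hff hyy).
rewrite (sum_nat_pair (yd c1 (minn t n1)) (yd c2 (t - n1))).
under eq_big_nat => y1o /andP[_ hy1o].
  under eq_big_nat => y2o /andP[_ hy2o].
    under eq_big_nat => b /andP[_ hb].
      rewrite (cW_ph2 ht hf1 hf2 hy1 hy2 hy1o hy2o hb).
      under eq_big_nat => a /andP[_ ha].
        rewrite (sum_nat_pair (xd c1 (minn t n1) * xd c2 (t - n1)) (fd c1 (minn t n1) * fd c2 (t - n1))).
        rewrite (sum_nat_pair (xd c1 (minn t n1)) (xd c2 (t - n1))).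
        under eq_big_nat => x1o /andP[_ hx1o].
          under eq_big_nat => x2o /andP[_ hx2o].
            rewrite (sum_nat_pair (fd c1 (minn t n1)) (fd c2 (t - n1))).
            rewrite (sum_nat_one _ hF1).
            have hf1o : (0 < fd c1 (minn t n1))%N by rewrite hF1.
            under eq_big_nat => f2o /andP[_ hf2o].
              rewrite (cU_ph2 _ ht ha hx1 hx2 hx1o hx2o hf1o hf2o).
              rewrite (IH _ _ _ _ _ _ hx1o hx2o hf1o hf2o hy1o hy2o).
              over.
            over.
          over.
        over.
      over.
    over.
  over.
rewrite e1 z1 in hx1 hf1 hy1 hx2 hf2 hy2 *; rewrite e0 /=.
rewrite (round_natE (cd := c2) _ _ _ hx2 hf2 hy2) f10 (subnK ht).
under eq_big_nat => y1o _ do under eq_big_nat => y2o _ do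
  under eq_big_nat => b _ do rewrite mulrAC.
under eq_big_nat => y1o _ do under eq_big_nat => y2o _ do rewrite -mulr_suml.
under eq_big_nat => y1o _ do rewrite -mulr_suml.
rewrite (sum_nat_delta_r _ hy1).
rewrite [RHS]mulr_sumr; apply: eq_big_nat => y2o /andP[_ hy2o].
rewrite [RHS]mulr_sumr; apply: eq_big_nat => b /andP[_ hb] /=.
rewrite mulrCA; congr (_ * _).
rewrite [RHS]mulr_sumr; apply: eq_big_nat => a /andP[_ ha].
rewrite mulrCA; congr (_ * _).
under eq_big_nat => x1o _ do under eq_big_nat => x2o _ do
  under eq_big_nat => f2o _ do rewrite mulrAC.
under eq_big_nat => x1o _ do under eq_big_nat => x2o _ do rewrite -mulr_suml.
under eq_big_nat => x1o _ do rewrite -mulr_suml.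
rewrite (sum_nat_delta_r _ hx1).
rewrite (sum_nat_pair (xd c2 (t - n1)) (fd c2 (t - n1))) [RHS]mulr_sumr.
apply: eq_big_nat => x2o _; rewrite [RHS]mulr_sumr.
apply: eq_big_nat => f2o _; by rewrite mulrCA.
Qed.

Lemma step0 : PFt 0.
Proof.
move=> x1 x2 f1 f2 y1 y2 hx1 hx2 hf1 hf2 hy1 hy2.
rewrite /= ent_mkmx; last 2 first.
- by apply: enc_lt; [apply: enc_lt; apply: enc_lt|apply: enc_lt].
- by [].
rewrite /dv /md !hiE ?loE ?hiE ?loE //; try by apply: enc_lt.
have e : minn 0 n1 = 0%N by apply/minn_idPl.
by rewrite e.
Qed.

Lemma prodF t : PFt t.
Proof.
elim: t => [|t IH]; first exact: step0.
case: (ltnP t n1)=> ht; [exact: step1|exact: step2].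
Qed.

End PG.

Lemma dec2 A B l : (l < A * B)%N -> exists i j, [/\ (i < A)%N, (j < B)%N & l = (i * B + j)%N].
Proof.
move=> hl; have B0 : (0 < B)%N by case: B hl => //; rewrite muln0.
exists (l %/ B)%N, (l %% B)%N; split; last exact: divn_eq.
  by rewrite ltn_divLR.
by rewrite ltn_mod.
Qed.

Lemma eq_enc i i' j j' B : (j < B)%N -> (j' < B)%N ->
  (i * B + j == i' * B + j')%N = (i == i') && (j == j').
Proof. by move=> h h'; rewrite eq_addl_mul // xpair_eqE. Qed.

Section PH.
Variable C : numClosedFieldType.

Lemma natb_and (a b : bool) : ((a && b)%:R : C) = a%:R * b%:R.
Proof. by rewrite -mulnb natrM. Qed.

Lemma conj_natb (b : bool) : ((b%:R : C)^*) = b%:R.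
Proof. exact: rmorph_nat. Qed.

Lemma sum_delta2 N x z (G : C) : (x < N)%N ->
  \sum_(0 <= y < N) G * ((y == x)%:R * (y == z)%:R) = G * (x == z)%:R.
Proof.
move=> hx; rewrite -(sum_nat_delta_r (fun y => G * (y == z)%:R) hx).
by apply: eq_big_nat=> y _; rewrite eq_sym mulrAC mulrA.
Qed.

Variables (dA dB n1 n2 M1 M2 : nat) (c1 : fcode C dA dB n1 M1) (c2 : fcode C dA dB n2 M2).

Lemma cU_iso m t : (t < n1 + n2)%N -> Defs.isometry (cU c1 c2 m t).
Proof.
move=> ht; apply/isometryP => j j' hj hj'.
have [xx [ff [hxx hff ->]]] := dec2 hj.
have [x1o [x2o [hx1o hx2o ->]]] := dec2 hxx.
have [f1o [f2o [hf1o hf2o ->]]] := dec2 hff.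
have [xx' [ff' [hxx' hff' ->]]] := dec2 hj'.
have [z1 [z2 [hz1 hz2 ->]]] := dec2 hxx'.
have [g1 [g2 [hg1 hg2 ->]]] := dec2 hff'.
rewrite (sum_nat_pair dA (cX c1 c2 t.+1)).
under eq_big_nat => a /andP[_ ha] do rewrite (sum_nat_pair (xd c1 (minn t.+1 n1)) (xd c2 (t.+1 - n1))).
rewrite !eq_enc //; try (by apply: enc_lt).
case: (ltnP t n1) => htn.
- have ez1 : (t.+1 - n1 = 0)%N by apply/eqP; rewrite subn_eq0.
  have ez0 : (t - n1 = 0)%N by apply/eqP; rewrite subn_eq0 ltnW.
  have hx2o' : (x2o < xd c2 (t.+1 - n1))%N by rewrite ez1 -ez0.
  under eq_big_nat => a /andP[_ ha].
    under eq_big_nat => x1 /andP[_ hx1].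
      under eq_big_nat => x2 /andP[_ hx2].
        rewrite (cU_ph1 _ htn ha hx1 hx2 hx1o hx2o hf1o hf2o).
        rewrite (cU_ph1 _ htn ha hx1 hx2 hz1 hz2 hg1 hg2).
        rewrite rmorphM rmorph_nat mulrACA.
        over.
      rewrite (sum_delta2 _ _ hx2o').
      over.
    over.
  under eq_big_nat => a _ do rewrite -mulr_suml.
  rewrite -mulr_suml.
  have e1 : minn t.+1 n1 = t.+1 by apply/minn_idPl.
  have e0 : minn t n1 = t by apply/minn_idPl/ltnW.
  rewrite e0 in hx1o hf1o hz1 hg1; rewrite e1.
  have f2o0 : f2o = 0%N by move: hf2o; rewrite ez0 fd0; case: f2o.
  have g20 : g2 = 0%N by move: hg2; rewrite ez0 fd0; case: g2.
  rewrite f2o0 g20 eqxx andbT.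
  have b1 : (x1o * fd c1 t + f1o < xd c1 t * fd c1 t)%N by apply: enc_lt.
  have b2 : (z1 * fd c1 t + g1 < xd c1 t * fd c1 t)%N by apply: enc_lt.
  have := (isometryP _).1 (encU_iso c1 (mxtens_unindex m).1 htn) _ _ b1 b2.
  rewrite (sum_nat_pair dA (xd c1 t.+1)) eq_enc // => h.
  apply: (@eq_trans _ _ (((x1o == z1) && (f1o == g1))%:R * (x2o == z2)%:R)).
    by congr (_ * _); exact: h.
  by case: (x1o == z1); case: (x2o == z2); case: (f1o == g1); rewrite /= ?mul1r ?mul0r ?mulr1 ?mulr0.
have e1 : minn t.+1 n1 = n1 by apply/minn_idPr/ltnW.
have e0 : minn t n1 = n1 by apply/minn_idPr.
have ez : (t.+1 - n1 = (t - n1).+1)%N by rewrite subSn.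
have hx1o' : (x1o < xd c1 (minn t.+1 n1))%N by move: hx1o; rewrite e1 e0.
under eq_big_nat => a /andP[_ ha].
  under eq_big_nat => x1 /andP[_ hx1].
    under eq_big_nat => x2 /andP[_ hx2].
      rewrite (cU_ph2 _ htn ha hx1 hx2 hx1o hx2o hf1o hf2o).
      rewrite (cU_ph2 _ htn ha hx1 hx2 hz1 hz2 hg1 hg2).
      rewrite rmorphM rmorph_nat mulrACA.
      over.
    rewrite -mulr_suml.
    over.
  rewrite (sum_delta2 _ _ hx1o').
  over.
rewrite -mulr_suml ez.
have f1o0 : f1o = 0%N by move: hf1o; rewrite e0 fdn; case: f1o.
have g10 : g1 = 0%N by move: hg1; rewrite e0 fdn; case: g1.
rewrite f1o0 g10 eqxx /=.
have hs : (t - n1 < n2)%N by rewrite ltn_subLR.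
have b1 : (x2o * fd c2 (t - n1) + f2o < xd c2 (t - n1) * fd c2 (t - n1))%N by apply: enc_lt.
have b2 : (z2 * fd c2 (t - n1) + g2 < xd c2 (t - n1) * fd c2 (t - n1))%N by apply: enc_lt.
have := (isometryP _).1 (encU_iso c2 (mxtens_unindex m).2 hs) _ _ b1 b2.
rewrite (sum_nat_pair dA (xd c2 (t - n1).+1)) eq_enc // => h.
apply: (@eq_trans _ _ (((x2o == z2) && (f2o == g2))%:R * (x1o == z1)%:R)).
  by congr (_ * _); exact: h.
by case: (x1o == z1); case: (x2o == z2); case: (f2o == g2); rewrite /= ?mul1r ?mul0r ?mulr1 ?mulr0.
Qed.

Lemma sum_nat_one' N (F : nat -> C) : N = 1%N -> \sum_(0 <= i < N) F i = F 0%N.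
Proof. by move=> ->; rewrite big_nat1. Qed.

Lemma cW_iso t : (t < n1 + n2)%N -> Defs.isometry (cW c1 c2 t).
Proof.
move=> ht; apply/isometryP => j j' hj hj'.
have [yy [b [hyy hb ->]]] := dec2 hj.
have [y1o [y2o [hy1o hy2o ->]]] := dec2 hyy.
have [yy' [b' [hyy' hb' ->]]] := dec2 hj'.
have [z1 [z2 [hz1 hz2 ->]]] := dec2 hyy'.
rewrite (sum_nat_pair (cF c1 c2 t.+1) (cY c1 c2 t.+1)).
rewrite (sum_nat_pair (fd c1 (minn t.+1 n1)) (fd c2 (t.+1 - n1))).
under eq_big_nat => f1 /andP[_ hf1] do under eq_big_nat => f2 /andP[_ hf2] do
  rewrite (sum_nat_pair (yd c1 (minn t.+1 n1)) (yd c2 (t.+1 - n1))).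
rewrite !eq_enc //; try (by apply: enc_lt).
case: (ltnP t n1) => htn.
- have ez1 : (t.+1 - n1 = 0)%N by apply/eqP; rewrite subn_eq0.
  have ez0 : (t - n1 = 0)%N by apply/eqP; rewrite subn_eq0 ltnW.
  have hy2o' : (y2o < yd c2 (t.+1 - n1))%N by rewrite ez1 -ez0.
  have hF2 : fd c2 (t.+1 - n1) = 1%N by rewrite ez1 fd0.
  have hf2 : (0 < fd c2 (t.+1 - n1))%N by rewrite hF2.
  under eq_big_nat => f1 /andP[_ hf1].
    rewrite (sum_nat_one' _ hF2).
    under eq_big_nat => y1 /andP[_ hy1].
      under eq_big_nat => y2 /andP[_ hy2].
        rewrite (cW_ph1 htn hf1 hf2 hy1 hy2 hy1o hy2o hb).
        rewrite (cW_ph1 htn hf1 hf2 hy1 hy2 hz1 hz2 hb').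
        rewrite rmorphM rmorph_nat mulrACA.
        over.
      rewrite (sum_delta2 _ _ hy2o').
      over.
    rewrite -mulr_suml.
    over.
  rewrite -mulr_suml.
  have e1 : minn t.+1 n1 = t.+1 by apply/minn_idPl.
  have e0 : minn t n1 = t by apply/minn_idPl/ltnW.
  rewrite e0 in hy1o hz1; rewrite e1.
  have b1 : (y1o * dB + b < yd c1 t * dB)%N by apply: enc_lt.
  have b2 : (z1 * dB + b' < yd c1 t * dB)%N by apply: enc_lt.
  have := (isometryP _).1 (decW_iso c1 htn) _ _ b1 b2.
  rewrite (sum_nat_pair (fd c1 t.+1) (yd c1 t.+1)) eq_enc // => h.
  apply: (@eq_trans _ _ (((y1o == z1) && (b == b'))%:R * (y2o == z2)%:R)).
    by congr (_ * _); exact: h.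
  by case: (y1o == z1); case: (y2o == z2); case: (b == b'); rewrite /= ?mul1r ?mul0r ?mulr1 ?mulr0.
have e1 : minn t.+1 n1 = n1 by apply/minn_idPr/ltnW.
have e0 : minn t n1 = n1 by apply/minn_idPr.
have ez : (t.+1 - n1 = (t - n1).+1)%N by rewrite subSn.
have hy1o' : (y1o < yd c1 (minn t.+1 n1))%N by move: hy1o; rewrite e1 e0.
have hF1 : fd c1 (minn t.+1 n1) = 1%N by rewrite e1 fdn.
have hf1 : (0 < fd c1 (minn t.+1 n1))%N by rewrite hF1.
rewrite (sum_nat_one' _ hF1).
under eq_big_nat => f2 /andP[_ hf2].
  under eq_big_nat => y1 /andP[_ hy1].
    under eq_big_nat => y2 /andP[_ hy2].
      rewrite (cW_ph2 htn hf1 hf2 hy1 hy2 hy1o hy2o hb).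
      rewrite (cW_ph2 htn hf1 hf2 hy1 hy2 hz1 hz2 hb').
      rewrite rmorphM rmorph_nat mulrACA.
      over.
    rewrite -mulr_suml.
    over.
  rewrite (sum_delta2 _ _ hy1o').
  over.
rewrite -mulr_suml ez.
have hs : (t - n1 < n2)%N by rewrite ltn_subLR.
have b1 : (y2o * dB + b < yd c2 (t - n1) * dB)%N by apply: enc_lt.
have b2 : (z2 * dB + b' < yd c2 (t - n1) * dB)%N by apply: enc_lt.
have := (isometryP _).1 (decW_iso c2 hs) _ _ b1 b2.
rewrite (sum_nat_pair (fd c2 (t - n1).+1) (yd c2 (t - n1).+1)) eq_enc // => h.
apply: (@eq_trans _ _ (((y2o == z2) && (b == b'))%:R * (y1o == z1)%:R)).
  by congr (_ * _); exact: h.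
by case: (y1o == z1); case: (y2o == z2); case: (b == b'); rewrite /= ?mul1r ?mul0r ?mulr1 ?mulr0.
Qed.

Lemma cphiE x1 x2 f1 f2 y1 y2 :
  (x1 < xd c1 (minn 0 n1))%N -> (x2 < xd c2 0)%N ->
  (f1 < fd c1 (minn 0 n1))%N -> (f2 < fd c2 0)%N ->
  (y1 < yd c1 (minn 0 n1))%N -> (y2 < yd c2 0)%N ->
  ent (cphi c1 c2)
    (((x1 * xd c2 0 + x2) * cF c1 c2 0 + (f1 * fd c2 0 + f2)) * cY c1 c2 0
       + (y1 * yd c2 0 + y2)) 0 =
  ent (phi c1) ((x1 * fd c1 (minn 0 n1) + f1) * yd c1 (minn 0 n1) + y1) 0 *
  ent (phi c2) ((x2 * fd c2 0 + f2) * yd c2 0 + y2) 0.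
Proof.
move=> hx1 hx2 hf1 hf2 hy1 hy2.
rewrite ent_mkmx; last 2 first.
- by apply: enc_lt; [apply: enc_lt; apply: enc_lt|apply: enc_lt].
- by [].
by rewrite /dv /md !hiE ?loE ?hiE ?loE //; apply: enc_lt.
Qed.

Lemma phi_sum (dA' dB' n M : nat) (c : fcode C dA' dB' n M) :
  \sum_(0 <= x < xd c 0) \sum_(0 <= y < yd c 0)
     (ent (phi c) ((x * fd c 0 + 0) * yd c 0 + y) 0)^* *
      ent (phi c) ((x * fd c 0 + 0) * yd c 0 + y) 0 = 1.
Proof.
have := (isometryP _).1 (phi_unit c) 0%N 0%N isT isT.
rewrite (sum_nat_pair (xd c 0 * fd c 0) (yd c 0)) (sum_nat_pair (xd c 0) (fd c 0)).
move=> h; transitivity (((0%N == 0%N)%:R : C)); last by rewrite eqxx.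
rewrite -h; apply: eq_big_nat=> x _.
by rewrite [RHS](sum_nat_one' _ (fd0 c)).
Qed.

Lemma cphi_iso : Defs.isometry (cphi c1 c2).
Proof.
apply/isometryP => j j'; rewrite !ltnS !leqn0 => /eqP -> /eqP ->.
rewrite (sum_nat_pair (cX c1 c2 0 * cF c1 c2 0) (cY c1 c2 0)).
rewrite (sum_nat_pair (cX c1 c2 0) (cF c1 c2 0)) eqxx.
have e : minn 0 n1 = 0%N by apply/minn_idPl.
have hF1 : fd c1 (minn 0 n1) = 1%N by rewrite e fd0.
have hF1' : (0 < fd c1 (minn 0 n1))%N by rewrite hF1.
have hF2' : (0 < fd c2 0)%N by rewrite fd0.
rewrite (sum_nat_pair (xd c1 (minn 0 n1)) (xd c2 0)).
under eq_big_nat => x1 /andP[_ hx1] do under eq_big_nat => x2 /andP[_ hx2] do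
  rewrite (sum_nat_pair (fd c1 (minn 0 n1)) (fd c2 0)) (sum_nat_one' _ hF1) (sum_nat_one' _ (fd0 c2))
    (sum_nat_pair (yd c1 (minn 0 n1)) (yd c2 0)).
under eq_big_nat => x1 /andP[_ hx1] do under eq_big_nat => x2 /andP[_ hx2] do
  under eq_big_nat => y1 /andP[_ hy1] do under eq_big_nat => y2 /andP[_ hy2] do
  rewrite (cphiE hx1 hx2 hF1' hF2' hy1 hy2) rmorphM mulrACA.
rewrite e.
under eq_big_nat => x1 _ do rewrite exchange_big.
under eq_big_nat => x1 _ do under eq_big_nat => y1 _ do under eq_big_nat => x2 _ do rewrite -mulr_sumr.
under eq_big_nat => x1 _ do under eq_big_nat => y1 _ do rewrite -mulr_sumr.
under eq_big_nat => x1 _ do rewrite -mulr_suml.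
by rewrite -mulr_suml !phi_sum mulr1.
Qed.

End PH.

Section PI.
Variable C : numClosedFieldType.

Lemma inner_nat dA dB n M (c : fcode C dA dB n M) m m' Es Fs l l' :
  (adjmx (wvec (branch c m Es n) l) *m wvec (branch c m' Fs n) l') 0 0 =
  \sum_(0 <= y < yd c n) (ent (branch c m Es n) (l * yd c n + y) 0)^* *
                         ent (branch c m' Fs n) (l' * yd c n + y) 0.
Proof.
rewrite mxE big_mkord; apply: eq_bigr=> y _.
rewrite adjmxE !mxE.
by rewrite -(entE (branch c m Es n) (mxtens_index (l, y)) 0)
           -(entE (branch c m' Fs n) (mxtens_index (l', y)) 0).
Qed.

Lemma mx11_eq0 (A : 'M[C]_1) : A 0 0 = 0 -> A = 0.
Proof. by move=> h; apply/matrixP=> i j; rewrite !ord1 h mxE. Qed.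

Lemma Zgen_nat dA dB n M (c : fcode C dA dB n M) S : Zgen c S ->
  forall m m', m != m' -> forall Es Fs,
  (forall t, (t < n)%N -> S (Es t)) -> (forall t, (t < n)%N -> S (Fs t)) ->
  forall l l', (l < xd c n * fd c n)%N -> (l' < xd c n * fd c n)%N ->
  \sum_(0 <= y < yd c n) (ent (branch c m Es n) (l * yd c n + y) 0)^* *
                         ent (branch c m' Fs n) (l' * yd c n + y) 0 = 0.
Proof.
move=> hZ m m' nm Es Fs hE hF l l' hl hl'.
have := hZ m m' nm Es Fs hE hF (Ordinal hl) (Ordinal hl').
by move/(congr1 (fun A : 'M[C]_1 => A 0 0)); rewrite inner_nat mxE.
Qed.

Variables (dA dB n1 n2 M1 M2 : nat) (c1 : fcode C dA dB n1 M1) (c2 : fcode C dA dB n2 M2).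

Definition ccode : fcode C dA dB (n1 + n2) (M1 * M2) :=
  cc (cphi_iso c1 c2) (fun m t h => cU_iso c1 c2 m h) (fun t h => cW_iso c1 c2 h).

Lemma ccode_zero k (E : 'I_k -> 'M[C]_(dB, dA)) :
  zero_error E c1 -> zero_error E c2 -> zero_error E ccode.
Proof.
move=> /zero_error_Zgen hZ1 /zero_error_Zgen hZ2; apply/zero_error_Zgen.
move=> m m' nm Es Fs hE hF l l'; apply: mx11_eq0; rewrite inner_nat.
have [xx [ff [hxx hff ->]]] := dec2 (ltn_ord l).
have [x1 [x2 [hx1 hx2 ->]]] := dec2 hxx.
have [f1 [f2 [hf1 hf2 ->]]] := dec2 hff.
have [xx' [ff' [hxx' hff' ->]]] := dec2 (ltn_ord l').
have [z1 [z2 [hz1 hz2 ->]]] := dec2 hxx'.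
have [g1 [g2 [hg1 hg2 ->]]] := dec2 hff'.
rewrite (sum_nat_pair (yd c1 (minn (n1 + n2) n1)) (yd c2 (n1 + n2 - n1))).
under eq_big_nat => y1 /andP[_ hy1] do under eq_big_nat => y2 /andP[_ hy2] do
  rewrite (prodF _ _ _ m Es hx1 hx2 hf1 hf2 hy1 hy2) (prodF _ _ _ m' Fs hz1 hz2 hg1 hg2 hy1 hy2)
    rmorphM mulrACA.
under eq_big_nat => y1 _ do rewrite -mulr_sumr.
rewrite -mulr_suml.
have e1 : minn (n1 + n2) n1 = n1 by apply/minn_idPr; rewrite leq_addr.
have e2 : (n1 + n2 - n1 = n2)%N by rewrite addKn.
rewrite e1 e2 in hx1 hx2 hf1 hf2 hz1 hz2 hg1 hg2 *.
have hE1 : forall t, (t < n1)%N -> exists j, Es t = E j.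
  by move=> t ht; apply: hE; apply: leq_trans ht (leq_addr _ _).
have hF1 : forall t, (t < n1)%N -> exists j, Fs t = E j.
  by move=> t ht; apply: hF; apply: leq_trans ht (leq_addr _ _).
have hE2 : forall t, (t < n2)%N -> exists j, Es (t + n1)%N = E j.
  by move=> t ht; apply: hE; rewrite addnC ltn_add2l.
have hF2 : forall t, (t < n2)%N -> exists j, Fs (t + n1)%N = E j.
  by move=> t ht; apply: hF; rewrite addnC ltn_add2l.
have : mxtens_unindex m != mxtens_unindex m'.
  by apply: contra nm => /eqP h; apply/eqP; apply: (can_inj (@mxtens_unindexK _ _)).
rewrite xpair_eqE negb_and => /orP [n1m|n2m].
  by rewrite (Zgen_nat hZ1 n1m hE1 hF1) ?mul0r //; apply: enc_lt.
by rewrite (Zgen_nat hZ2 n2m hE2 hF2) ?mulr0 //; apply: enc_lt.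
Qed.

End PI.

Section PJ.
Variable C : numClosedFieldType.

Definition codes dA dB k (E : 'I_k -> 'M[C]_(dB, dA)) n M :=
  exists c : fcode C dA dB n M, zero_error E c.

Lemma codes_mul dA dB k (E : 'I_k -> 'M[C]_(dB, dA)) n1 n2 M1 M2 :
  codes E n1 M1 -> codes E n2 M2 -> codes E (n1 + n2) (M1 * M2).
Proof.
by move=> [c1 h1] [c2 h2]; exists (ccode c1 c2); apply: ccode_zero.
Qed.

Lemma delta_iso N : (0 < N)%N ->
  Defs.isometry (mkmx N 1 (fun i _ => ((i == 0)%N)%:R : C)).
Proof.
move=> hN; apply/isometryP => j j'; rewrite !ltnS !leqn0 => /eqP -> /eqP ->.
transitivity (\sum_(0 <= i < N) ((0 == i)%N)%:R * (1 : C)).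
  apply: eq_big_nat=> i /andP[_ hi]; rewrite ent_mkmx // eq_sym.
  by case: (0 == i)%N; rewrite ?rmorph1 ?rmorph0 ?mulr1 ?mulr0.
by rewrite (sum_nat_delta _ hN) eqxx.
Qed.

Lemma idn_iso P Q : (Q <= P)%N -> Defs.isometry (mkmx P Q (fun i j => ((i == j)%N)%:R : C)).
Proof.
move=> hQP; apply/isometryP => j j' hj hj'.
have hjP : (j < P)%N by apply: leq_trans hj hQP.
rewrite -(sum_nat_delta (fun i => ((i == j')%N)%:R : C) hjP).
apply: eq_big_nat=> i /andP[_ hi]; rewrite !ent_mkmx // eq_sym.
by case: (j == i)%N; rewrite ?rmorph1 ?rmorph0 ?mul1r ?mul0r.
Qed.

Lemma triv_code dA dB k (E : 'I_k -> 'M[C]_(dB, dA)) n : (0 < dA)%N -> codes E n 1.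
Proof.
move=> hA.
have h1 : (0 < 1 * 1 * dB ^ 0)%N by [].
have hU : forall (m : 'I_1) t, (t < n)%N ->
   Defs.isometry (mkmx (dA * 1) (1 * 1) (fun i _ => ((i == 0)%N)%:R : C)).
  by move=> m t _; apply: delta_iso; rewrite muln1.
have hW : forall t, (t < n)%N ->
   Defs.isometry (mkmx (1 * dB ^ t.+1) (dB ^ t * dB) (fun i j => ((i == j)%N)%:R : C)).
  by move=> t _; apply: idn_iso; rewrite mul1n expnSr.
exists (@FCode C dA dB n 1 (fun _ => 1%N) (fun t => dB ^ t)%N (fun _ => 1%N) erefl erefl
   _ (delta_iso h1) (fun _ _ => _) hU _ hW).
by move=> m m'; rewrite !ord1.
Qed.

Lemma code_dA dA dB n M (c : fcode C dA dB n.+1 M) : (0 < M)%N -> (0 < dA)%N.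
Proof.
move=> hM; case: (posnP dA) => // hA0.
have hq : (xd c 0 * fd c 0 = 0)%N.
  case: (posnP (xd c 0 * fd c 0)) => // hq.
  have := (isometryP _).1 (encU_iso c (Ordinal hM) (ltn0Sn n)) 0%N 0%N hq hq.
  have hA : (dA == 0)%N by apply/eqP. rewrite big_geq; last by rewrite leqn0 muln_eq0 hA.
  by move=> /= /esym/eqP; rewrite oner_eq0.
have := (isometryP _).1 (phi_unit c) 0%N 0%N isT isT.
have hq0 : (xd c 0 * fd c 0 == 0)%N by apply/eqP.
rewrite big_geq; last by rewrite leqn0 muln_eq0 hq0.
by move=> /= /esym/eqP; rewrite oner_eq0.
Qed.

End PJ.

Section PK.
Variable R : realType.
Variable P : nat -> nat -> Prop.
Hypothesis Pmul : forall n1 n2 M1 M2, P n1 M1 -> P n2 M2 -> P (n1 + n2)%N (M1 * M2)%N.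
Hypothesis Ptriv : forall p M, P p.+1 M -> (0 < M)%N -> forall n, P n 1%N.

Definition mf n : \bar R := ereal_sup [set (M%:R)%:E | M in [set M : nat | P n M]].
Definition rr (N' : nat) : \bar R := (elog2 (mf N'.+1) * ((N'.+1)%:R^-1)%:E)%E.

Lemma mf_ge n M : P n M -> ((M%:R)%:E <= mf n)%E.
Proof. by move=> h; apply: ereal_sup_ubound; exists M. Qed.

Lemma ln2_gt0 : (0 : R) < ln 2.
Proof. by apply: ln_gt0; rewrite ltr1n. Qed.

Lemma elog2_ge (a : R) X : 0 < a -> (a%:E <= X)%E -> ((ln a / ln 2)%:E <= elog2 X)%E.
Proof.
case: X => [x| |] //= ha hax; last by rewrite leey.
rewrite lee_fin in hax; have x0 : 0 < x by apply: lt_le_trans hax.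
rewrite x0 lee_fin ler_pM2r ?invr_gt0 ?ln2_gt0 //.
by rewrite ler_ln ?posrE.
Qed.

Lemma elog2_lt (X : R) Y : (X%:E < elog2 Y)%E -> ((expR (X * ln 2))%:E < Y)%E.
Proof.
case: Y => [y| |] /=; [|by move=> _; exact: ltry|by []].
case: ifP => // y0; rewrite !lte_fin => h.
rewrite -[X in _ < X](lnK (x := y)) ?posrE // ltr_expR.
by rewrite -ltr_pdivlMr ?ln2_gt0.
Qed.

Lemma F1 n : (rr n <= ereal_sup (range rr))%E.
Proof. by apply: ereal_sup_ubound; exists n. Qed.

Lemma F2 (x : R) : (x%:E < ereal_sup (range rr))%E -> (\forall n \near \oo, (x%:E < rr n)%E)%classic.
Proof.
move=> /ereal_sup_gt [_ [p _ <-] hxp].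
have P0 : (0 : R) < (p.+1)%:R by rewrite ltr0n.
have hX : ((x * (p.+1)%:R)%:E < elog2 (mf p.+1))%E.
  move: hxp; rewrite /rr; case: (elog2 (mf p.+1)) => [z| |] //=.
  - by rewrite -EFinM !lte_fin -ltr_pdivlMr.
  - by rewrite ltry.
  - by rewrite mulNyr gtr0_sg ?invr_gt0 // mul1e.
have /elog2_lt /ereal_sup_gt [_ [M hM <-] hMe] := hX.
rewrite lte_fin in hMe.
have M0 : (0 < M)%N by rewrite -(ltr0n R); apply: lt_trans hMe; exact: expR_gt0.
have triv := Ptriv hM M0.
set L := ln (M%:R : R) / ln 2.
have hXL : x * (p.+1)%:R < L.
  rewrite /L ltr_pdivlMr ?ln2_gt0 // -(expRK (x * (p.+1)%:R * ln 2)).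
  by rewrite ltr_ln ?posrE ?expR_gt0 ?ltr0n.
have L0 : 0 <= L by rewrite /L divr_ge0 ?ln_ge0 ?ler1n // ltW // ln2_gt0.
have Pq : forall q, P (q * p.+1) (M ^ q).
  elim=> [|q IH]; first exact: triv.
  by rewrite mulSnr expnSr; apply: Pmul.
have PN : forall N, P N (M ^ (N %/ p.+1)).
  move=> N; rewrite {1}(divn_eq N p.+1) -[(M ^ _)%N]muln1; exact: Pmul (Pq _) (triv _).
have low : forall n, ((((n.+1 %/ p.+1)%:R * L) * (n.+1)%:R^-1)%:E <= rr n)%E.
  move=> n; rewrite /rr EFinM; apply: lee_wpmul2r; first by rewrite lee_fin invr_ge0.
  have hM' : (0 : R) < (M ^ (n.+1 %/ p.+1))%:R by rewrite ltr0n expn_gt0 M0.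
  apply: le_trans (elog2_ge hM' (mf_ge (PN n.+1))).
  by rewrite lee_fin natrX lnXn ?ltr0n // /L mulrA mulr_natl.
set K := ((p.+1)%:R * L) / (L - x * (p.+1)%:R).
have K0 : 0 <= K.
  by apply: divr_ge0; [apply: mulr_ge0 => //; exact: ler0n|rewrite subr_ge0; exact: ltW].
exists (Num.Def.archi_bound K) => // n /= hn.
apply: lt_le_trans (low n); rewrite lte_fin ltr_pdivlMr ?ltr0n //.
set q := (n.+1 %/ p.+1)%N.
have hq : ((n.+1)%:R : R) < q%:R * (p.+1)%:R + (p.+1)%:R.
  by rewrite -natrM -natrD ltr_nat {1}(divn_eq n.+1 p.+1) ltn_add2l ltn_mod.
have hK : K < (n.+1)%:R.
  apply: lt_le_trans (archi_boundP K0) _; rewrite ler_nat; exact: leqW.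
have d0 : 0 < L - x * (p.+1)%:R by rewrite subr_gt0.
move: hK; rewrite /K ltr_pdivrMr // => hK.
nra.
Qed.

Lemma fekete : (rr @ \oo --> ereal_sup (range rr))%classic.
Proof.
have hF1 := F1; have hF2 := F2.
move: hF1 hF2; set S := ereal_sup (range rr) => hF1 hF2.
case hS : S hF1 hF2 => [l| |] hF1 hF2.
- apply/fine_cvgP; split.
    apply: filterS (hF2 (l - 1) _); last by rewrite lte_fin ltrBlDr ltrDl.
    move=> n hn; rewrite fin_numElt; apply/andP; split.
      by apply: lt_trans hn; rewrite ltNyr.
    by apply: le_lt_trans (hF1 n) _; rewrite ltry.
  apply/cvgrPdist_lt => e e0.
  apply: filterS (hF2 (l - e) _); last by rewrite lte_fin ltrBlDr ltrDl.
  move=> n /=; have := hF1 n; case: (rr n) => [z| |] //= hz hn.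
  rewrite lee_fin in hz; rewrite lte_fin in hn.
  rewrite ger0_norm ?subr_ge0 //; by rewrite ltrBlDr -ltrBlDl.
- by apply/cvgeyPgt => A; apply: hF2; rewrite ltry.
- have -> : rr = fun _ => -oo%E.
    by apply: funext => n; apply/eqP; rewrite -leeNy_eq hF1.
  exact: cvg_cst.
Qed.

End PK.


Theorem proposition1 (C : numClosedFieldType) (R : realType) (dA dB k k' : nat)
    (E : 'I_k -> 'M[C]_(dB, dA)) (E' : 'I_k' -> 'M[C]_(dB, dA)) :
  is_channel E -> is_channel E' ->
  (kraus_mx E == kraus_mx E')%MS ->
  (forall (n M : nat) (c : fcode C dA dB n M), zero_error E c <-> zero_error E' c) /\
  (forall n : nat, Mf R E n = Mf R E' n) /\
  C0EF R E = C0EF R E' /\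
  (rate_seq R E @ \oo --> C0EF R E)%classic.
Proof.
move=> _ _ hK.
have hK' : (kraus_mx E' == kraus_mx E)%MS by move: hK => /andP[a b]; apply/andP.
have h1 : forall (n M : nat) (c : fcode C dA dB n M), zero_error E c <-> zero_error E' c.
  by move=> n M c; split; apply: zero_error_transfer.
have h2 : forall n : nat, Mf R E n = Mf R E' n.
  move=> n; rewrite /Mf; congr ereal_sup; apply/seteqP; split=> _ [M [c hc] <-];
    by exists M => //; exists c; apply/h1.
have h3 : rate_seq R E = rate_seq R E'.
  by apply: funext => n; rewrite /rate_seq h2.
split=> //; split=> //; split; first by rewrite /C0EF h3.
apply: (@fekete R (fun n M => codes E n M)).
- by move=> n1 n2 M1 M2; apply: codes_mul.
- move=> p M [c _] M0 n; apply: triv_code; exact: code_dA c M0.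
Qed.
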